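(* Let $k>1$, $p>1$, and $r,s\in(0,1)$ with $r\ge s$. Then $$\left(\frac{\arcsin_p(s)}{\arcsin_p(r)}\right)^k\le\frac{\arcsin_p(s^k)}{\arcsin_p(r^k)},\qquad \left(\frac{\operatorname{artanh}_p(s)}{\operatorname{artanh}_p(r)}\right)^k\le\frac{\operatorname{artanh}_p(s^k)}{\operatorname{artanh}_p(r^k)},\qquad \frac{\operatorname{arsinh}_p(s^k)}{\operatorname{arsinh}_p(r^k)}\le\left(\frac{\operatorname{arsinh}_p(s)}{\operatorname{arsinh}_p(r)}\right)^k.$$
   Context: For $p>1$ and $y\in(0,1)$: $\arcsin_p y=\int_0^y(1-t^p)^{-1/p}dt$, $\operatorname{arsinh}_p y=\int_0^y(1+t^p)^{-1/p}dt$, $\operatorname{artanh}_p y=\int_0^y(1-t^p)^{-1}dt$. *)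

(* Defs.v *)
From Stdlib Require Import Reals.
From Coquelicot Require Import Coquelicot.
Open Scope R_scope.

(* Real power x^a for x > 0, extended by 0 for x <= 0 (so 0^a = 0 for a > 0). *)
Definition rpow (x a : R) : R :=
  if Rlt_dec 0 x then Rpower x a else 0.

Definition arcsin_p (p y : R) : R :=
  RInt (fun t => rpow (1 - rpow t p) (- / p)) 0 y.

Definition arsinh_p (p y : R) : R :=
  RInt (fun t => rpow (1 + rpow t p) (- / p)) 0 y.

Definition artanh_p (p y : R) : R :=
  RInt (fun t => / (1 - rpow t p)) 0 y.

(* Main.v *)
Require Import Defs.
From Stdlib Require Import Reals Lra.
From Coquelicot Require Import Coquelicot.
Open Scope R_scope.

Lemma ball_R (x e y : R) : ball x e y <-> Rabs (y - x) < e.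
Proof. reflexivity. Qed.

Lemma rpow_pos x a : 0 < x -> rpow x a = Rpower x a.
Proof. intros H; unfold rpow; destruct (Rlt_dec 0 x); [reflexivity| lra]. Qed.

Lemma rpow_npos x a : x <= 0 -> rpow x a = 0.
Proof. intros H; unfold rpow; destruct (Rlt_dec 0 x); [lra|reflexivity]. Qed.

Lemma Rpower_gt0 x a : 0 < Rpower x a.
Proof. unfold Rpower; apply exp_pos. Qed.

Lemma Rpower_1base a : Rpower 1 a = 1.
Proof. unfold Rpower; rewrite ln_1, Rmult_0_r; apply exp_0. Qed.

Lemma continuous_Rpower_base x a : 0 < x -> continuous (fun z => Rpower z a) x.
Proof.
  intros Hx. unfold Rpower.
  apply (continuous_comp (fun z => a * ln z) exp).
  - apply (continuous_mult (fun _ => a) ln). apply continuous_const. now apply continuous_ln.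
  - apply continuous_exp.
Qed.

Lemma continuous_rpow_base x a : 0 < x -> continuous (fun z => rpow z a) x.
Proof.
  intros Hx. apply continuous_ext_loc with (fun z => Rpower z a).
  - exists (mkposreal x Hx). intros y Hy. assert (H: Rabs (y - x) < x) by exact Hy.
    symmetry; apply rpow_pos. destruct (Rabs_def2 _ _ H). lra.
  - now apply continuous_Rpower_base.
Qed.

Lemma cont_h p t : 0 < p -> continuous (fun z => rpow z p) t.
Proof.
  intros Hp. destruct (Rlt_or_le 0 t) as [Ht|Ht]; [now apply continuous_rpow_base|].
  destruct (Rle_lt_or_eq_dec _ _ Ht) as [Hl|He].
  - apply continuous_ext_loc with (fun _ => 0).
    + exists (mkposreal (-t) ltac:(lra)). intros y Hy. assert (H: Rabs (y - t) < -t) by exact Hy.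
      destruct (Rabs_def2 _ _ H). symmetry; apply rpow_npos; lra.
    + apply continuous_const.
  - subst t. unfold continuous. apply (proj2 (filterlim_locally _ _)).
    intros eps. assert (Hd: 0 < Rpower eps (/p)) by apply Rpower_gt0.
    exists (mkposreal _ Hd). intros y Hy. assert (H: Rabs (y - 0) < Rpower eps (/p)) by exact Hy.
    change (Rabs (rpow y p - rpow 0 p) < eps).
    rewrite (rpow_npos 0 p) by lra.
    destruct (Rlt_or_le 0 y) as [Hy0|Hy0].
    + rewrite rpow_pos by lra. rewrite Rminus_0_r, Rabs_pos_eq by (left; apply Rpower_gt0).
      rewrite Rminus_0_r, Rabs_pos_eq in H by lra.
      apply Rlt_le_trans with (Rpower (Rpower eps (/p)) p).
      * apply Rlt_Rpower_l; lra.
      * rewrite Rpower_mult. rewrite Rinv_l by lra. rewrite Rpower_1 by apply cond_pos. lra.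
    + rewrite rpow_npos by lra. rewrite Rminus_0_r, Rabs_R0. apply cond_pos.
Qed.

Lemma h_range p t : 0 < p -> 0 <= t < 1 -> 0 <= rpow t p < 1.
Proof.
  intros Hp Ht. destruct (Rlt_or_le 0 t) as [H|H].
  - rewrite rpow_pos by lra. split; [left; apply Rpower_gt0|].
    rewrite <- (Rpower_1base p). apply Rlt_Rpower_l; lra.
  - rewrite rpow_npos by lra. lra.
Qed.

Lemma h_mult p x u : 0 < x -> 0 <= u -> rpow (x*u) p = rpow x p * rpow u p.
Proof.
  intros Hx Hu. destruct (Rlt_or_le 0 u) as [H|H].
  - rewrite !rpow_pos by (try apply Rmult_lt_0_compat; lra). now rewrite Rpower_mult_distr.
  - assert (u = 0) by lra. subst u. rewrite Rmult_0_r, rpow_npos by lra. ring.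
Qed.

Lemma h_mono p x y : 0 < p -> 0 <= y <= x -> rpow y p <= rpow x p.
Proof.
  intros Hp H. destruct (Rlt_or_le 0 y) as [Hy|Hy].
  - rewrite !rpow_pos by lra. apply Rle_Rpower_l; lra.
  - rewrite (rpow_npos y) by lra. unfold rpow. destruct (Rlt_dec 0 x); [left; apply Rpower_gt0|lra].
Qed.


Definition HC (g : R -> R) := forall t, 0 <= t < 1 -> continuous g t.
Definition HP (g : R -> R) := forall t, 0 <= t < 1 -> 0 < g t.
Definition HM (g : R -> R) (sg : R) := forall x y u, 0 < y <= x -> x < 1 -> 0 <= u <= 1 ->
  0 <= sg * (g (y*u) * g x - g (x*u) * g y).

Lemma exF g x : HC g -> 0 <= x < 1 -> ex_RInt g 0 x.
Proof. intros Hc Hx. apply (@ex_RInt_continuous R_CompleteNormedModule). intros z Hz.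
  rewrite Rmin_left, Rmax_right in Hz by lra. apply Hc; lra. Qed.

Lemma Fpos g x : HC g -> HP g -> 0 < x < 1 -> 0 < RInt g 0 x.
Proof. intros Hc Hp Hx. apply RInt_gt_0; [lra| intros; apply Hp; lra | intros; apply Hc; lra]. Qed.

Lemma F_sub g x : HC g -> 0 < x < 1 ->
  is_RInt (fun u => x * g (x*u)) 0 1 (RInt g 0 x).
Proof.
  intros Hc Hx.
  pose proof (RInt_comp_lin g x 0 0 1) as E.
  pose proof (ex_RInt_comp_lin g x 0 0 1) as E2.
  replace (x*0+0) with 0 in E, E2 by ring. replace (x*1+0) with x in E, E2 by ring.
  specialize (E (exF g x Hc ltac:(lra))). specialize (E2 (exF g x Hc ltac:(lra))).
  rewrite <- E.
  apply (is_RInt_ext (fun y => scal x (g (x*y+0)))).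
  - intros z _. rewrite Rplus_0_r. reflexivity.
  - now apply (@RInt_correct R_CompleteNormedModule).
Qed.

Lemma Dsign g sg x y : HC g -> HM g sg -> 0 < y <= x -> x < 1 ->
  0 <= sg * (x * g x * RInt g 0 y - y * g y * RInt g 0 x).
Proof.
  intros Hc Hm Hxy Hx1.
  pose proof (F_sub g x Hc ltac:(lra)) as Ix.
  pose proof (F_sub g y Hc ltac:(lra)) as Iy.
  pose proof (is_RInt_scal _ _ _ (x * g x) _ Iy) as Jy.
  pose proof (is_RInt_scal _ _ _ (y * g y) _ Ix) as Jx.
  pose proof (is_RInt_minus _ _ _ _ _ _ Jy Jx) as J.
  pose proof (is_RInt_scal _ _ _ sg _ J) as K.
  apply (is_RInt_ge_0 _ 0 1 _ ltac:(lra) K).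
  intros u Hu. change (0 <= sg * (x * g x * (y * g (y*u)) + - (y * g y * (x * g (x*u))))).
  specialize (Hm x y u ltac:(lra) ltac:(lra) ltac:(lra)).
  replace (sg * (x * g x * (y * g (y*u)) + - (y * g y * (x * g (x*u)))))
    with ((x*y) * (sg * (g (y * u) * g x - g (x * u) * g y))) by ring.
  apply Rmult_le_pos; [|exact Hm]. apply Rmult_le_pos; lra.
Qed.

Lemma derF g x : HC g -> 0 < x < 1 -> is_derive (fun z => RInt g 0 z) x (g x).
Proof.
  intros Hc Hx. apply is_derive_RInt with (a := 0).
  - assert (He: 0 < Rmin x (1-x)) by (apply Rmin_glb_lt; lra).
    exists (mkposreal _ He). intros b Hb. assert (H: Rabs (b - x) < Rmin x (1-x)) by exact Hb.
    destruct (Rabs_def2 _ _ H). pose proof (Rmin_l x (1-x)). pose proof (Rmin_r x (1-x)).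
    apply (@RInt_correct R_CompleteNormedModule). apply exF; auto; lra.
  - apply Hc; lra.
Qed.

Definition phi g k y := ln (RInt g 0 (Rpower y k)) - k * ln (RInt g 0 y).
Definition dphi g k y := (k * Rpower y (k-1)) * (g (Rpower y k) * / RInt g 0 (Rpower y k))
   - k * (g y * / RInt g 0 y).

Lemma Rpow_lt1 y k : 0 < y < 1 -> 1 < k -> 0 < Rpower y k < y.
Proof.
  intros Hy Hk. split; [apply Rpower_gt0|]. unfold Rpower.
  rewrite <- (exp_ln y) at 2 by lra. apply exp_increasing.
  assert (ln y < 0). { rewrite <- ln_1. apply ln_increasing; lra. }
  nra.
Qed.

Lemma is_derive_eq (f : R -> R) x l l' : is_derive f x l -> l = l' -> is_derive f x l'.
Proof. intros; subst; auto. Qed.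

Lemma phi_der g k y : HC g -> HP g -> 1 < k -> 0 < y < 1 -> is_derive (phi g k) y (dphi g k y).
Proof.
  intros Hc Hp Hk Hy.
  destruct (Rpow_lt1 y k Hy Hk) as [Hz1 Hz2].
  assert (D1: is_derive (fun y => Rpower y k) y (k * Rpower y (k-1)))
    by (apply is_derive_Reals, derivable_pt_lim_power; lra).
  assert (D2: is_derive (fun w => RInt g 0 w) (Rpower y k) (g (Rpower y k))) by (apply derF; auto; lra).
  assert (D3: is_derive ln (RInt g 0 (Rpower y k)) (/ RInt g 0 (Rpower y k)))
    by (apply is_derive_ln, Fpos; auto; lra).
  pose proof (is_derive_comp (fun w => RInt g 0 w) (fun y => Rpower y k) y _ _ D2 D1) as D12.
  pose proof (is_derive_comp ln (fun y => RInt g 0 (Rpower y k)) y _ _ D3 D12) as D123.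
  assert (D4: is_derive (fun w => RInt g 0 w) y (g y)) by (apply derF; auto).
  assert (D5: is_derive ln (RInt g 0 y) (/ RInt g 0 y)) by (apply is_derive_ln, Fpos; auto).
  pose proof (is_derive_comp ln (fun w => RInt g 0 w) y _ _ D5 D4) as D45.
  pose proof (is_derive_scal (fun y => ln (RInt g 0 y)) y k _ D45) as D6.
  pose proof (is_derive_minus (fun y => ln (RInt g 0 (Rpower y k))) (fun y => k * ln (RInt g 0 y)) y _ _ D123 D6) as D.
  eapply is_derive_eq; [exact D|].
  unfold dphi, minus, plus, opp, scal; simpl; unfold mult; simpl. ring.
Qed.

Lemma dphi_sign g sg k y : HC g -> HP g -> HM g sg -> 1 < k -> 0 < y < 1 -> sg * dphi g k y <= 0.
Proof.
  intros Hc Hp Hm Hk Hy.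
  destruct (Rpow_lt1 y k Hy Hk) as [Hz1 Hz2].
  assert (Hr: Rpower y (k-1) = Rpower y k / y).
  { replace (Rpower y k) with (Rpower y ((k-1)+1)) by (f_equal; ring).
    rewrite Rpower_plus, Rpower_1 by lra. field. lra. }
  unfold dphi. rewrite Hr.
  pose proof (Dsign g sg y (Rpower y k) Hc Hm ltac:(lra) ltac:(lra)) as Ds.
  pose proof (Fpos g y Hc Hp Hy) as Fy.
  pose proof (Fpos g (Rpower y k) Hc Hp ltac:(lra)) as Fz.
  set (z := Rpower y k) in *. set (A := RInt g 0 z) in *. set (B := RInt g 0 y) in *.
  replace (sg * (k * (z / y) * (g z * / A) - k * (g y * / B)))
    with (-(k / (y * A * B)) * (sg * (y * g y * A - z * g z * B))) by (field; lra).
  assert (0 <= k / (y * A * B) * (sg * (y * g y * A - z * g z * B))).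
  { apply Rmult_le_pos; [|exact Ds]. left. apply Rdiv_lt_0_compat; [lra|].
    apply Rmult_lt_0_compat; [apply Rmult_lt_0_compat|]; lra. }
  lra.
Qed.

Lemma phi_mono g sg k s r : HC g -> HP g -> HM g sg -> 1 < k -> 0 < s -> s <= r -> r < 1 ->
  sg * (phi g k r - phi g k s) <= 0.
Proof.
  intros Hc Hp Hm Hk Hs Hsr Hr.
  destruct (MVT_gen (phi g k) s r (dphi g k)) as [c [Hc1 Hc2]].
  - intros x Hx. rewrite Rmin_left, Rmax_right in Hx by lra. apply phi_der; auto; lra.
  - intros x Hx. rewrite Rmin_left, Rmax_right in Hx by lra.
    apply continuity_pt_filterlim. apply (ex_derive_continuous (phi g k)).
    exists (dphi g k x). apply phi_der; auto; lra.
  - rewrite Rmin_left, Rmax_right in Hc1 by lra. rewrite Hc2.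
    pose proof (dphi_sign g sg k c Hc Hp Hm Hk ltac:(lra)).
    replace (sg * (dphi g k c * (r - s))) with ((sg * dphi g k c) * (r - s)) by ring.
    nra.
Qed.

Lemma generic g sg k r s : (sg = 1 \/ sg = -1) -> HC g -> HP g -> HM g sg -> 1 < k ->
  0 < r < 1 -> 0 < s < 1 -> s <= r ->
  0 <= sg * (RInt g 0 (rpow s k) / RInt g 0 (rpow r k) - rpow (RInt g 0 s / RInt g 0 r) k).
Proof.
  intros Hsg Hc Hp Hm Hk Hr Hs Hsr.
  pose proof (phi_mono g sg k s r Hc Hp Hm Hk ltac:(lra) Hsr ltac:(lra)) as H.
  unfold phi in H.
  destruct (Rpow_lt1 s k Hs Hk). destruct (Rpow_lt1 r k Hr Hk).
  pose proof (Fpos g s Hc Hp Hs). pose proof (Fpos g r Hc Hp Hr).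
  pose proof (Fpos g (Rpower s k) Hc Hp ltac:(lra)). pose proof (Fpos g (Rpower r k) Hc Hp ltac:(lra)).
  rewrite !rpow_pos by (try apply Rdiv_lt_0_compat; lra).
  assert (E1: RInt g 0 (Rpower s k) / RInt g 0 (Rpower r k)
     = exp (ln (RInt g 0 (Rpower s k)) - ln (RInt g 0 (Rpower r k)))).
  { rewrite <- ln_div by lra. rewrite exp_ln; [reflexivity|]. apply Rdiv_lt_0_compat; lra. }
  assert (E2: Rpower (RInt g 0 s / RInt g 0 r) k
     = exp (k * (ln (RInt g 0 s) - ln (RInt g 0 r)))).
  { unfold Rpower. rewrite ln_div by lra. reflexivity. }
  rewrite E1, E2.
  set (a := ln (RInt g 0 (Rpower s k)) - ln (RInt g 0 (Rpower r k))) in *.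
  set (b := k * (ln (RInt g 0 s) - ln (RInt g 0 r))) in *.
  assert (Hab: sg * (b - a) <= 0) by (unfold a, b; lra).
  destruct Hsg as [->| ->].
  - assert (Hba: b <= a) by lra.
    destruct (Rle_lt_or_eq_dec _ _ Hba) as [Hl|He]; [pose proof (exp_increasing _ _ Hl); lra|rewrite He; lra].
  - assert (Hba: a <= b) by lra.
    destruct (Rle_lt_or_eq_dec _ _ Hba) as [Hl|He]; [pose proof (exp_increasing _ _ Hl); lra|rewrite He; lra].
Qed.

Lemma negpow_anti X Y q : 0 <= q -> 0 < X <= Y -> Rpower Y (-q) <= Rpower X (-q).
Proof.
  intros Hq HXY. rewrite !Rpower_Ropp. apply Rinv_le_contravar; [apply Rpower_gt0|].
  apply Rle_Rpower_l; lra.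
Qed.

Lemma cont_pmh p c t : 0 < p -> continuous (fun z => 1 + c * rpow z p) t.
Proof.
  intros Hp. apply (continuous_plus (fun _ => 1) (fun z => c * rpow z p)).
  - apply continuous_const.
  - apply (continuous_mult (fun _ => c) (fun z => rpow z p)). apply continuous_const. now apply cont_h.
Qed.

Lemma h1 p : 0 < p -> rpow 1 p = 1.
Proof. intros. rewrite rpow_pos by lra. apply Rpower_1base. Qed.

Lemma hfacts p x y u : 0 < p -> 0 < y <= x -> x < 1 -> 0 <= u <= 1 ->
  rpow (y*u) p = rpow y p * rpow u p /\ rpow (x*u) p = rpow x p * rpow u p /\
  rpow y p <= rpow x p /\ 0 <= rpow y p /\ rpow x p < 1 /\ 0 <= rpow u p <= 1.
Proof.
  intros Hp Hyx Hx Hu.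
  split; [apply h_mult; lra|]. split; [apply h_mult; lra|].
  split; [apply h_mono; lra|]. split; [destruct (h_range p y Hp ltac:(lra)); lra|].
  split; [destruct (h_range p x Hp ltac:(lra)); lra|].
  split; [unfold rpow; destruct (Rlt_dec 0 u); [left; apply Rpower_gt0|lra]|]. rewrite <- (h1 p Hp). apply h_mono; lra.
Qed.

Definition gA p t := rpow (1 + (-1) * rpow t p) (- / p).
Definition gT p t := / (1 + (-1) * rpow t p).
Definition gS p t := rpow (1 + 1 * rpow t p) (- / p).

Lemma gA_ok p : 1 < p -> HC (gA p) /\ HP (gA p) /\ HM (gA p) 1.
Proof.
  intros Hp. split; [|split].
  - intros t Ht. unfold gA. apply (continuous_comp (fun z => 1 + (-1) * rpow z p) (fun z => rpow z (-/p))).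
    + apply cont_pmh; lra.
    + apply continuous_rpow_base. pose proof (h_range p t ltac:(lra) Ht). lra.
  - intros t Ht. unfold gA. pose proof (h_range p t ltac:(lra) Ht). rewrite rpow_pos by lra. apply Rpower_gt0.
  - intros x y u Hyx Hx Hu. unfold gA.
    destruct (hfacts p x y u ltac:(lra) Hyx Hx Hu) as (E1 & E2 & M & P1 & P2 & P3).
    rewrite E1, E2. set (a := rpow x p) in *. set (b := rpow y p) in *. set (w := rpow u p) in *.
    assert (0 < /p) by (apply Rinv_0_lt_compat; lra).
    assert (b * w <= b) by nra. assert (a * w <= a) by nra.
    rewrite !rpow_pos by lra. rewrite !Rpower_mult_distr by lra.
    assert (Q1: 0 < (1 + -1 * (b*w)) * (1 + -1 * a)) by (apply Rmult_lt_0_compat; lra).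
    assert (Q2: (1 + -1 * (b*w)) * (1 + -1 * a) <= (1 + -1 * (a*w)) * (1 + -1 * b)) by nra.
    pose proof (negpow_anti _ _ (/p) ltac:(lra) (conj Q1 Q2)). lra.
Qed.

Lemma gS_ok p : 1 < p -> HC (gS p) /\ HP (gS p) /\ HM (gS p) (-1).
Proof.
  intros Hp. split; [|split].
  - intros t Ht. unfold gS. apply (continuous_comp (fun z => 1 + 1 * rpow z p) (fun z => rpow z (-/p))).
    + apply cont_pmh; lra.
    + apply continuous_rpow_base. pose proof (h_range p t ltac:(lra) Ht). lra.
  - intros t Ht. unfold gS. pose proof (h_range p t ltac:(lra) Ht). rewrite rpow_pos by lra. apply Rpower_gt0.
  - intros x y u Hyx Hx Hu. unfold gS.
    destruct (hfacts p x y u ltac:(lra) Hyx Hx Hu) as (E1 & E2 & M & P1 & P2 & P3).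
    rewrite E1, E2. set (a := rpow x p) in *. set (b := rpow y p) in *. set (w := rpow u p) in *.
    assert (0 < /p) by (apply Rinv_0_lt_compat; lra).
    assert (0 <= b * w) by nra. assert (0 <= a * w) by nra.
    rewrite !rpow_pos by lra. rewrite !Rpower_mult_distr by lra.
    assert (Q1: 0 < (1 + 1 * (a*w)) * (1 + 1 * b)) by (apply Rmult_lt_0_compat; lra).
    assert (Q2: (1 + 1 * (a*w)) * (1 + 1 * b) <= (1 + 1 * (b*w)) * (1 + 1 * a)) by nra.
    pose proof (negpow_anti _ _ (/p) ltac:(lra) (conj Q1 Q2)). lra.
Qed.

Lemma gT_ok p : 1 < p -> HC (gT p) /\ HP (gT p) /\ HM (gT p) 1.
Proof.
  intros Hp. split; [|split].
  - intros t Ht. unfold gT. apply continuous_Rinv_comp.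
    + apply cont_pmh; lra.
    + pose proof (h_range p t ltac:(lra) Ht). lra.
  - intros t Ht. unfold gT. pose proof (h_range p t ltac:(lra) Ht). apply Rinv_0_lt_compat. lra.
  - intros x y u Hyx Hx Hu. unfold gT.
    destruct (hfacts p x y u ltac:(lra) Hyx Hx Hu) as (E1 & E2 & M & P1 & P2 & P3).
    rewrite E1, E2. set (a := rpow x p) in *. set (b := rpow y p) in *. set (w := rpow u p) in *.
    assert (b * w <= b) by nra. assert (a * w <= a) by nra.
    rewrite <- !Rinv_mult.
    assert (Q1: 0 < (1 + -1 * (b*w)) * (1 + -1 * a)) by (apply Rmult_lt_0_compat; lra).
    assert (Q2: (1 + -1 * (b*w)) * (1 + -1 * a) <= (1 + -1 * (a*w)) * (1 + -1 * b)) by nra.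
    pose proof (Rinv_le_contravar _ _ Q1 Q2). lra.
Qed.

Theorem lemma2p6 (k p r s : R) :
  1 < k -> 1 < p -> 0 < r < 1 -> 0 < s < 1 -> s <= r ->
  rpow (arcsin_p p s / arcsin_p p r) k
    <= arcsin_p p (rpow s k) / arcsin_p p (rpow r k) /\
  rpow (artanh_p p s / artanh_p p r) k
    <= artanh_p p (rpow s k) / artanh_p p (rpow r k) /\
  arsinh_p p (rpow s k) / arsinh_p p (rpow r k)
    <= rpow (arsinh_p p s / arsinh_p p r) k.
Proof.
  intros Hk Hp Hr Hs Hsr.
  assert (EA: forall y, arcsin_p p y = RInt (gA p) 0 y).
  { intros y. unfold arcsin_p, gA. apply RInt_ext. intros; f_equal; ring. }
  assert (ET: forall y, artanh_p p y = RInt (gT p) 0 y).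
  { intros y. unfold artanh_p, gT. apply RInt_ext. intros; f_equal; ring. }
  assert (ES: forall y, arsinh_p p y = RInt (gS p) 0 y).
  { intros y. unfold arsinh_p, gS. apply RInt_ext. intros; f_equal; ring. }
  rewrite !EA, !ET, !ES.
  destruct (gA_ok p Hp) as (A1 & A2 & A3).
  destruct (gT_ok p Hp) as (T1 & T2 & T3).
  destruct (gS_ok p Hp) as (S1 & S2 & S3).
  pose proof (generic (gA p) 1 k r s (or_introl eq_refl) A1 A2 A3 Hk Hr Hs Hsr).
  pose proof (generic (gT p) 1 k r s (or_introl eq_refl) T1 T2 T3 Hk Hr Hs Hsr).
  pose proof (generic (gS p) (-1) k r s (or_intror eq_refl) S1 S2 S3 Hk Hr Hs Hsr).
  lra.
Qed.
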